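(* Let $m,s$ be positive integers and $t,r$ integers with $r^s\equiv 1\pmod m$ and $m\mid t(r-1)$, and let $G=\langle a,b\mid a^m=1,\ b^s=a^t,\ b^{-1}ab=a^r\rangle$. If $(m,r-1)\mid t$, then $G$ is the active sum of the family consisting of $\langle a\rangle$, $\langle b\rangle$ and all their conjugates in $G$.
   Context: $(x,y)$ denotes the greatest common divisor (with $(m,0)=m$). Such a group is finite metacyclic with $a$ of order $m$. For a group $G$ and a family $\mathcal{F}$ of distinct subgroups that generates $G$ and is closed under conjugation, the active sum $S$ of $\mathcal{F}$ is the free product of the members of $\mathcal{F}$ divided by the normal subgroup generated by all elements $h^{-1}\cdot g\cdot h\cdot (g^h)^{-1}$ with $h\in F_1$, $g\in F_2$, $F_1,F_2\in\mathcal{F}$, where $g^h=h^{-1}gh$ is regarded as an element of the factor $h^{-1}F_2h\in\mathcal{F}$. The inclusions induce a canonical surjection $\varphi:S\to G$, and ''$G$ is the active sum of $\mathcal{F}$'' means $\varphi$ is an isomorphism. *)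

(* Defs.v *)
From mathcomp Require Import all_boot all_order all_algebra all_fingroup.
Set Implicit Arguments. Unset Strict Implicit. Unset Printing Implicit Defensive.
Local Open Scope group_scope.

Definition expgz (gT : finGroupType) (x : gT) (z : int) : gT :=
  match z with Posz n => x ^+ n | Negz n => x ^- n.+1 end.

Section ActiveSum.
Variable gT : finGroupType.

(* A letter of the free product of the members of a family: a pair (F, g)
   standing for the element g of the factor F. *)
Definition letter := ({group gT} * gT)%type.

Definition wf_letter (Fam : {set {group gT}}) (l : letter) : bool :=
  (l.1 \in Fam) && (l.2 \in l.1).

Definition eval_word (w : seq letter) : gT := \prod_(l <- w) l.2.

(* The congruence on words whose quotient is the active sum S: the free
   product of the members of Fam (monoid presentation: (F,1) = empty word,
   (F,x)(F,y) = (F,xy)), divided by the relations h^-1 . g . h = g^h where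
   g^h lives in the factor F2 :^ h. *)
Inductive as_rel (Fam : {set {group gT}}) : seq letter -> seq letter -> Prop :=
| asr_refl w : as_rel Fam w w
| asr_sym w1 w2 : as_rel Fam w1 w2 -> as_rel Fam w2 w1
| asr_trans w1 w2 w3 : as_rel Fam w1 w2 -> as_rel Fam w2 w3 -> as_rel Fam w1 w3
| asr_cat w1 w2 v1 v2 : as_rel Fam w1 w2 -> as_rel Fam v1 v2 ->
    as_rel Fam (w1 ++ v1) (w2 ++ v2)
| asr_one (F : {group gT}) : F \in Fam -> as_rel Fam [:: (F, 1)] [::]
| asr_mul (F : {group gT}) x y : F \in Fam -> x \in F -> y \in F ->
    as_rel Fam [:: (F, x); (F, y)] [:: (F, x * y)]
| asr_conj (F1 F2 : {group gT}) h g : F1 \in Fam -> F2 \in Fam ->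
    h \in F1 -> g \in F2 ->
    as_rel Fam [:: (F1, h^-1); (F2, g); (F1, h)] [:: ((F2 :^ h)%G, g ^ h)].

(* G is the active sum of Fam: Fam is a family of subgroups of G generating G,
   closed under conjugation in G, and the canonical surjection S -> G is
   injective (any two well-formed words with equal values in G are equal
   in S). *)
Definition active_sum (G : {group gT}) (Fam : {set {group gT}}) : Prop :=
  [/\ forall F : {group gT}, F \in Fam -> F \subset G,
      G :=: <<\bigcup_(F in Fam) F>>,
      forall (F : {group gT}) x, F \in Fam -> x \in G -> (F :^ x)%G \in Fam &
      forall w1 w2 : seq letter, all (wf_letter Fam) w1 -> all (wf_letter Fam) w2 ->
        eval_word w1 = eval_word w2 -> as_rel Fam w1 w2].
End ActiveSum.

(* Main.v *)
Require Import Defs.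
From mathcomp Require Import all_boot all_order all_algebra all_fingroup.
From mathcomp Require Import zify ring.
Import GRing.Theory.
Local Open Scope group_scope.

Module Helpers.
Set Implicit Arguments. Unset Strict Implicit. Unset Printing Implicit Defensive.


Section Words.
Variable gT : finGroupType.
Variable Fam : {set {group gT}}.
Local Notation R := (as_rel Fam).

Lemma ar_cons l w1 w2 : R w1 w2 -> R (l :: w1) (l :: w2).
Proof. by move=> h; apply: (@asr_cat _ _ [:: l] [:: l]) => //; apply: asr_refl. Qed.

Lemma ar_catl v w1 w2 : R w1 w2 -> R (w1 ++ v) (w2 ++ v).
Proof. by move=> h; apply: asr_cat => //; apply: asr_refl. Qed.

Lemma ar_catr v w1 w2 : R w1 w2 -> R (v ++ w1) (v ++ w2).
Proof. by move=> h; apply: asr_cat => //; apply: asr_refl. Qed.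

Lemma eval_as_rel w1 w2 : R w1 w2 -> eval_word w1 = eval_word w2.
Proof.
elim=> {w1 w2} //.
- by move=> w1 w2 w3 _ -> _ ->.
- by move=> w1 w2 v1 v2 _ e1 _ e2; rewrite /eval_word !big_cat /= -!/(eval_word _) e1 e2.
- by move=> F _; rewrite /eval_word big_seq1 big_nil.
- by move=> F x y *; rewrite /eval_word !big_cons !big_nil !mulg1.
- by move=> F1 F2 h g *; rewrite /eval_word !big_cons !big_nil !mulg1 conjgE mulgA.
Qed.

Lemma ar_cancel (F : {group gT}) x : F \in Fam -> x \in F ->
  R [:: (F, x); (F, x^-1)] [::].
Proof.
move=> FF xF; apply: asr_trans (asr_mul FF xF (groupVr xF)) _.
by rewrite mulgV; apply: asr_one.
Qed.

Lemma ar_cancel' (F : {group gT}) x : F \in Fam -> x \in F ->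
  R [:: (F, x^-1); (F, x)] [::].
Proof.
move=> FF xF; have := ar_cancel FF (groupVr xF); by rewrite invgK.
Qed.

Lemma ar_split (F : {group gT}) x y : F \in Fam -> x \in F -> y \in F ->
  R [:: (F, x * y)] [:: (F, x); (F, y)].
Proof. by move=> *; apply: asr_sym; apply: asr_mul. Qed.

End Words.



Section Main.
Variables (gT : finGroupType) (Fam : {set {group gT}}) (A B : {group gT}) (b c x0 : gT).
Hypotheses (FA : A \in Fam) (FB : B \in Fam) (Bb : b \in B) (Bc : c \in B) (Ac : c \in A)
  (Ax0 : x0 \in A) (nAB : forall y, y \in B -> (A :^ y)%G = A) (Bx0 : (B :^ x0)%G = B)
  (hx0 : (x0^-1)^b * x0 = c).
Local Notation R := (as_rel Fam).

Lemma key : R [:: (B, c)] [:: (A, c)].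
Proof.
set y := (x0^-1)^b.
have s2 : R [:: (A, y)] [:: (B, b^-1); (A, x0^-1); (B, b)].
  apply: asr_sym; have := asr_conj FB FA Bb (groupVr Ax0); by rewrite nAB.
have e1 : R [:: (B,b); (A,c)] [:: (B,b); (A,y); (A,x0)].
  apply: ar_cons; rewrite -hx0; apply: ar_split => //; rewrite /y.
  by rewrite -(nAB Bb) memJ_conjg groupV.
have e2 : R [:: (B,b); (A,y); (A,x0)]
    ([:: (B,b); (B,b^-1)] ++ [:: (A,x0^-1); (B,b); (A,x0)]).
  by apply: ar_cons; exact: (ar_catl [:: (A,x0)] s2).
have e3 : R ([:: (B,b); (B,b^-1)] ++ [:: (A,x0^-1); (B,b); (A,x0)])
   ([::] ++ [:: (A,x0^-1); (B,b); (A,x0)]) := ar_catl _ (ar_cancel FB Bb).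
have e4 : R [:: (A,x0^-1); (B,b); (A,x0)] [:: (B,b); (B,c)].
  have := asr_conj FA FB Ax0 Bb; rewrite Bx0 => h; apply: asr_trans h _.
  have -> : b ^ x0 = b * c by rewrite -hx0 !conjgE !mulgA mulgV mul1g.
  exact: ar_split.
have e5 : R [:: (B,b); (A,c)] [:: (B,b); (B,c)].
  exact: asr_trans e1 (asr_trans e2 (asr_trans e3 e4)).
have := ar_cons (B, b^-1) e5 => e6.
have f1 : R [:: (B, b^-1); (B,b); (A,c)] [:: (A, c)]
  := ar_catl [:: (A,c)] (ar_cancel' FB Bb).
have f2 : R [:: (B, b^-1); (B,b); (B,c)] [:: (B, c)]
  := ar_catl [:: (B,c)] (ar_cancel' FB Bb).
exact: asr_trans (asr_sym f2) (asr_trans (asr_sym e6) f1).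
Qed.

Lemma keyq q : R [:: (B, c ^+ q)] [:: (A, c ^+ q)].
Proof.
elim: q => [|q IH].
  by rewrite expg0; apply: asr_trans (asr_one FB) (asr_sym (asr_one FA)).
rewrite expgSr.
apply: asr_trans (ar_split FB (groupX q Bc) Bc) _.
apply: asr_trans (asr_mul FA (groupX q Ac) Ac).
exact: (asr_cat IH key).
Qed.

Lemma swapBA y z : y \in B -> z \in A ->
  R [:: (B, y); (A, z)] [:: (A, z ^ y^-1); (B, y)].
Proof.
move=> yB zA.
have h := asr_conj FB FA (groupVr yB) zA; rewrite invgK nAB ?groupV // in h.
have f1 : R [:: (B, y); (A, z)] [:: (B, y); (A, z); (B, y^-1); (B, y)].
  apply: asr_sym.
  exact: (ar_catr [:: (B, y); (A, z)] (ar_cancel' FB yB)).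
apply: asr_trans f1 _.
exact: (ar_catl [:: (B, y)] h).
Qed.

End Main.



Section NF.
Variables (gT : finGroupType) (Fam : {set {group gT}}) (A B : {group gT}) (b c x0 : gT) (s : nat).
Hypotheses (FA : A \in Fam) (FB : B \in Fam) (Bb : b \in B) (Bc : c \in B) (Ac : c \in A)
  (Ax0 : x0 \in A) (nAB : forall y, y \in B -> (A :^ y)%G = A) (Bx0 : (B :^ x0)%G = B)
  (hx0 : (x0^-1)^b * x0 = c) (s_gt0 : 0 < s) (hc : c = b ^+ s)
  (cycB : forall y, y \in B -> exists k, y = b ^+ k).
Local Notation R := (as_rel Fam).

Definition basic (l : letter gT) :=
  ((l.1 == A) && (l.2 \in A)) || ((l.1 == B) && (l.2 \in B)).

Lemma nAB_mem y z : y \in B -> z \in A -> z ^ y \in A.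
Proof. by move=> yB zA; rewrite -(nAB yB) memJ_conjg. Qed.

Lemma nf_letter x j l : x \in A -> j < s -> basic l ->
  exists x' j', [/\ x' \in A, j' < s &
    R [:: (A, x); (B, b ^+ j); l] [:: (A, x'); (B, b ^+ j')]].
Proof.
move=> xA js; case: l => F z; case/orP => /andP [/= /eqP -> zF].
  have bjB : b ^+ j \in B by rewrite groupX.
  have z'A : z ^ (b ^+ j)^-1 \in A by rewrite nAB_mem ?groupV.
  exists (x * z ^ (b ^+ j)^-1), j; split => //; first by rewrite groupM.
  apply: asr_trans (ar_cons _ (swapBA FA FB nAB bjB zF)) _.
  exact: (ar_catl [:: (B, b ^+ j)] (asr_mul FA xA z'A)).
have [k ->] := cycB zF.
set n := j + k; set q := n %/ s.
have bn : b ^+ n = b ^+ (n %% s) * c ^+ q.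
  by rewrite hc -expgM /q /n {1}(divn_eq (j + k) s) addnC expgD mulnC.
have bjB : b ^+ (n %% s) \in B by rewrite groupX.
have cqB : c ^+ q \in B by rewrite groupX.
have cqA : c ^+ q \in A by rewrite groupX.
have z'A : (c ^+ q) ^ (b ^+ (n %% s))^-1 \in A by rewrite nAB_mem ?groupV.
exists (x * (c ^+ q) ^ (b ^+ (n %% s))^-1), (n %% s); split.
- by rewrite groupM.
- by rewrite ltn_mod.
apply: asr_trans (ar_cons _ (asr_mul FB (groupX j Bb) (groupX k Bb))) _.
rewrite -expgD -/n bn.
apply: asr_trans (ar_cons _ (ar_split FB bjB cqB)) _.
apply: asr_trans (ar_cons _ (ar_cons _ (keyq FA FB Bb Bc Ac Ax0 nAB Bx0 hx0 q))) _.
apply: asr_trans (ar_cons _ (swapBA FA FB nAB bjB cqA)) _.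
exact: (ar_catl [:: (B, b ^+ (n %% s))] (asr_mul FA xA z'A)).
Qed.

Lemma nf_word u x j : all basic u -> x \in A -> j < s ->
  exists x' j', [/\ x' \in A, j' < s &
    R ([:: (A, x); (B, b ^+ j)] ++ u) [:: (A, x'); (B, b ^+ j')]].
Proof.
elim: u x j => [|l u IH] x j /=.
  by move=> _ xA js; exists x, j; split => //; apply: asr_refl.
case/andP=> bl bu xA js.
have [x1 [j1 [x1A j1s e1]]] := nf_letter xA js bl.
have [x2 [j2 [x2A j2s e2]]] := IH x1 j1 bu x1A j1s.
exists x2, j2; split => //.
apply: asr_trans e2.
exact: (ar_catl u e1).
Qed.

End NF.



Section Fam.
Variables (gT : finGroupType) (G : {group gT}) (a b : gT).
Hypothesis defG : G :=: <<[set a; b]>>.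
Let Fam := [set (<[a]> :^ g)%G | g in G] :|: [set (<[b]> :^ g)%G | g in G].
Local Notation R := (as_rel Fam).
Let A := <[a]>%G.
Let B := <[b]>%G.

Lemma aG : a \in G. Proof. by rewrite defG mem_gen // !inE eqxx. Qed.
Lemma bG : b \in G. Proof. by rewrite defG mem_gen // !inE eqxx orbT. Qed.

Lemma FamA : A \in Fam.
Proof.
apply/setUP; left; apply/imsetP; exists 1; first exact: group1.
by apply: val_inj; rewrite /= conjsg1.
Qed.

Lemma FamB : B \in Fam.
Proof.
apply/setUP; right; apply/imsetP; exists 1; first exact: group1.
by apply: val_inj; rewrite /= conjsg1.
Qed.

Lemma Fam_conj (F : {group gT}) h : F \in Fam -> h \in G -> (F :^ h)%G \in Fam.
Proof.
move=> FF hG; case/setUP: FF => /imsetP [g gG ->]; apply/setUP; [left|right];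
  apply/imsetP; exists (g * h); rewrite ?groupM //;
  by apply: val_inj; rewrite /= conjsgM.
Qed.

Lemma Fam_sub (F : {group gT}) : F \in Fam -> F \subset G.
Proof.
case/setUP => /imsetP [g gG ->] /=; rewrite -(conjGid gG) conjSg cycle_subG.
  exact: aG.
exact: bG.
Qed.

Definition Good h := exists u v, [/\ all (basic A B) u, all (basic A B) v &
  forall (F : {group gT}) g, F \in Fam -> g \in F ->
    R [:: ((F :^ h)%G, g ^ h)] (u ++ (F, g) :: v)].

Lemma good1 : Good 1.
Proof.
exists [::], [::]; split => // F g FF gF.
have -> : (F :^ 1)%G = F by apply: val_inj; rewrite /= conjsg1.
rewrite conjg1; exact: asr_refl.
Qed.

Lemma goodM h x : h \in G -> x \in [set a; b] -> Good h -> Good (h * x).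
Proof.
move=> hG xab [u [v [bu bv hR]]].
have [X [FX xX bX1 bX2]] : exists X : {group gT}, [/\ X \in Fam, x \in X,
    basic A B (X, x^-1) & basic A B (X, x)].
  case/set2P: xab => ->.
    by exists A; split; rewrite /basic /= ?eqxx ?groupV ?cycle_id ?FamA.
  by exists B; split; rewrite /basic /= ?eqxx ?groupV ?cycle_id ?FamB ?orbT.
have xG : x \in G by case/set2P: xab => ->; [exact: aG | exact: bG].
exists ((X, x^-1) :: u), (v ++ [:: (X, x)]); split.
- by rewrite /= bX1.
- by rewrite all_cat bv /= bX2.
move=> F g FF gF.
have FhF := Fam_conj FF hG.
have ghF : g ^ h \in (F :^ h)%G by rewrite /= memJ_conjg.
have := asr_conj FX FhF xX ghF.
have -> : ((F :^ h) :^ x)%G = (F :^ (h * x))%G by apply: val_inj; rewrite /= conjsgM.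
rewrite -conjgM => e; apply: asr_trans (asr_sym e) _.
apply: ar_cons; apply: (asr_trans (ar_catl [:: (X, x)] (hR F g FF gF))).
rewrite -catA; exact: asr_refl.
Qed.

Lemma good_all h : h \in G -> Good h.
Proof.
rewrite {1}defG => /gen_prodgP [n [c cab ->]].
elim: n c cab => [|n IH] c cab; first by rewrite big_ord0; exact: good1.
rewrite big_ord_recr /=.
have pG : \prod_(i < n) c (widen_ord (leqnSn n) i) \in G.
  rewrite group_prod // => i _; have := cab (widen_ord (leqnSn n) i).
  by case/set2P => ->; [exact: aG | exact: bG].
apply: goodM => //; apply: IH => i; exact: cab.
Qed.

Lemma letter_basic (l : letter gT) : wf_letter Fam l ->
  exists u, all (basic A B) u /\ R [:: l] u.
Proof.
case: l => F g /andP [/= FF gF].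
case/setUP: (FF) => /imsetP [h hG defF].
- have [u [v [bu bv hR]]] := good_all hG.
  have g'A : g ^ h^-1 \in A by rewrite -(memJ_conjg _ h) conjgKV; move: gF; rewrite defF.
  exists (u ++ (A, g ^ h^-1) :: v); split.
    by rewrite all_cat bu /= bv /basic /= eqxx g'A.
  by have := hR A _ FamA g'A; rewrite conjgKV; move: gF; rewrite defF.
- have [u [v [bu bv hR]]] := good_all hG.
  have g'B : g ^ h^-1 \in B by rewrite -(memJ_conjg _ h) conjgKV; move: gF; rewrite defF.
  exists (u ++ (B, g ^ h^-1) :: v); split.
    by rewrite all_cat bu /= bv /basic /= eqxx g'B orbT.
  by have := hR B _ FamB g'B; rewrite conjgKV; move: gF; rewrite defF.
Qed.

Lemma word_basic w : all (wf_letter Fam) w ->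
  exists u, all (basic A B) u /\ R w u.
Proof.
elim: w => [|l w IH] /=; first by exists [::]; split => //; exact: asr_refl.
case/andP=> wl ww; have [u1 [b1 e1]] := letter_basic wl.
have [u2 [b2 e2]] := IH ww.
by exists (u1 ++ u2); split; [rewrite all_cat b1 | exact: (asr_cat e1 e2)].
Qed.

End Fam.

Section IntArith.
Local Open Scope ring_scope.
Local Open Scope group_scope.


Lemma expgz_mod (gT : finGroupType) (x : gT) (m : nat) (z : int) :
  (0 < m)%N -> x ^+ m = 1 -> expgz x z = x ^+ absz (z %% m%:Z)%Z.
Proof.
move=> m0 xm; case: z => n /=.
  by rewrite modz_nat /= expg_mod.
set N := absz _.
have HN : N%:Z = (Negz n %% m%:Z)%Z by rewrite /N; lia.
have dv : ((N + n.+1) %% m = 0)%N.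
  apply/eqP; rewrite -(eqz_nat _ 0) -modz_nat PoszD HN modzDml.
  have -> : (Negz n + n.+1%:Z = 0)%R by lia.
  by rewrite mod0z.
have h1 : x ^+ N * x ^+ n.+1 = 1 by rewrite -expgD -(expg_mod _ xm) dv.
by rewrite -[LHS]mul1g -h1 mulgK.
Qed.

Lemma find_K (m : nat) (t r : int) : (0 < m)%N ->
  (gcdz m%:Z (r - 1)%R %| t)%Z ->
  exists K, (K %% m = (absz (r %% m%:Z)%Z * K + absz (t %% m%:Z)%Z) %% m)%N.
Proof.
move=> m0 /dvdzP [e he].
have [u [v huv]] := Bezoutz m%:Z (r - 1)%R.
set k := (- (v * e))%R.
exists (absz (k %% m%:Z)%Z).
apply/eqP; rewrite -eqz_nat -!modz_nat PoszD PoszM.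
have HK : forall z : int, (absz (z %% m%:Z)%Z)%:Z = (z %% m%:Z)%Z by move=> z; lia.
rewrite !HK modzDmr; apply/eqP.
rewrite -modzDml modzMml modzMmr modzDml modz_mod.
have -> : (r * k + t = (e * u) * m%:Z + k)%R.
  by rewrite he -huv /k; ring.
by rewrite modzMDl.
Qed.

End IntArith.
End Helpers.
Import Helpers.


Lemma cyc_conj_eq (gT : finGroupType) (x y : gT) :
  x ^ y \in <[x]> -> (<[x]> :^ y)%G = <[x]>%G.
Proof.
move=> h; apply: val_inj => /=; apply/eqP.
by rewrite eqEcard cardJg leqnn andbT -cycleJ cycle_subG.
Qed.

Theorem theorem3p5 (m s : nat) (t r : int) (gT : finGroupType)
    (G : {group gT}) (a b : gT) :
  (0 < m)%N -> (0 < s)%N ->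
  ((r ^+ s)%R == 1 %[mod m])%Z ->
  (m%:Z %| (t * (r - 1))%R)%Z ->
  G :=: <<[set a; b]>> ->
  a ^+ m = 1 -> b ^+ s = expgz a t -> a ^ b = expgz a r ->
  (forall (rT : finGroupType) (x y : rT),
      x ^+ m = 1 -> y ^+ s = expgz x t -> x ^ y = expgz x r ->
      exists f : {morphism G >-> rT}, f a = x /\ f b = y) ->
  (gcdz m%:Z (r - 1)%R %| t)%Z ->
  active_sum G ([set (<[a]> :^ g)%G | g in G] :|: [set (<[b]> :^ g)%G | g in G]).
Proof.
move=> m0 s0 _ _ defG am bs abr univ hgcd.
set Fam := _ :|: _.
set A := <[a]>%G; set B := <[b]>%G.
set c := b ^+ s.
have FA : A \in Fam := FamA G a b.
have FB : B \in Fam := FamB G a b.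
have Bb : b \in B := cycle_id b.
have Bc : c \in B by rewrite groupX.
have Ac : c \in A by rewrite /c bs; case: (t) => n /=; rewrite ?groupV groupX ?cycle_id.
have nAB : forall y, y \in B -> (A :^ y)%G = A.
  have abA : a ^ b \in <[a]>.
    by rewrite abr; case: (r) => n /=; rewrite ?groupV groupX ?cycle_id.
  have bN : b \in 'N(A).
    apply/normP; have := @cyc_conj_eq _ a b abA; move/(congr1 val) => /= h.
    by rewrite h.
  have BN : B \subset 'N(A) by rewrite cycle_subG.
  by move=> y yB; apply: val_inj => /=; apply/normP; exact: (subsetP BN).
have [K hK] := find_K m0 hgcd.
set x0 := a ^+ K.
have Ax0 : x0 \in A by rewrite groupX ?cycle_id.
have hx0 : (x0^-1)^b * x0 = c.
  have ab' := abr; rewrite (expgz_mod r m0 am) in ab'.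
  rewrite /c bs (expgz_mod t m0 am) conjVg conjXg ab' -expgM.
  rewrite /x0 -(expg_mod K am) hK (expg_mod _ am) expgD mulnC mulgA mulVg mul1g.
  by [].
have Bx0 : (B :^ x0)%G = B.
  apply: cyc_conj_eq.
  have -> : b ^ x0 = b * c by rewrite -hx0 !conjgE !mulgA mulgV mul1g.
  by rewrite groupM.
have cycB : forall y, y \in B -> exists k, y = b ^+ k by move=> y /cycleP.
split.
- exact: Fam_sub defG.
- apply/eqP; rewrite eqEsubset; apply/andP; split.
    rewrite defG genS //; apply/subsetP => z /set2P [->|->].
      by apply: (subsetP (bigcup_sup A FA)); exact: cycle_id.
    by apply: (subsetP (bigcup_sup B FB)); exact: cycle_id.
  rewrite gen_subG; apply/bigcupsP => F FF; exact: Fam_sub defG F FF.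
- by move=> F x FF xG; exact: Fam_conj.
move=> w1 w2 ww1 ww2 ev.
have nf : forall w, all (wf_letter Fam) w -> exists x j, [/\ x \in A, (j < s)%N &
    as_rel Fam w [:: (A, x); (B, b ^+ j)]].
  move=> w ww; have [u [bu eu]] := word_basic defG ww.
  have [x [j [xA js e]]] := nf_word FA FB Bb Bc Ac Ax0 nAB Bx0 hx0 s0 (erefl c) cycB
     bu (group1 A) s0.
  exists x, j; split => //; apply: asr_trans eu _; apply: asr_trans e.
  rewrite expg0.
  apply: asr_trans (asr_sym (ar_catl u (asr_one FB))) _.
  exact: (asr_sym (ar_catl ((B, 1) :: u) (asr_one FA))).
have [x1 [j1 [x1A j1s e1]]] := nf w1 ww1.
have [x2 [j2 [x2A j2s e2]]] := nf w2 ww2.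
have ev' : x1 * b ^+ j1 = x2 * b ^+ j2.
  move: (eval_as_rel e1) (eval_as_rel e2); rewrite /eval_word !big_cons !big_nil !mulg1 /=.
  by move=> <- <-.
have aG' : a \in G := aG defG.
have bG' : b \in G := bG defG.
have AG : forall x, x \in A -> x \in G.
  by move=> x /cycleP [k ->]; rewrite groupX.
have jj : j1 = j2.
  have [s' es] : exists s', s = s'.+1 by exists s.-1; rewrite prednK.
  subst s.
  have e1t : forall z : int, expgz (1 : 'I_s'.+1) z = 1.
    by move=> z; case: z => n /=; rewrite expg1n ?invg1.
  have ys : (Zp1 : 'I_s'.+1) ^+ s'.+1 = expgz (1 : 'I_s'.+1) t.
    by rewrite e1t Zp_expg; apply: val_inj; rewrite /= modnMl.
  have yr : (1 : 'I_s'.+1) ^ Zp1 = expgz (1 : 'I_s'.+1) r.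
    by rewrite e1t conj1g.
  have [f [fa fb]] := univ 'I_s'.+1 1 Zp1 (expg1n _ _) ys yr.
  have fA : forall x, x \in A -> f x = 1.
    by move=> x /cycleP [k ->]; rewrite morphX // fa expg1n.
  have := congr1 f ev'; rewrite !morphM ?groupX ?(AG x1) ?(AG x2) //.
  rewrite (fA x1) // (fA x2) // !mul1g !morphX // fb.
  move/(congr1 val); rewrite !Zp_expg /= !modnMml !mul1n (modn_small j1s).
  by rewrite (modn_small j2s).
subst j2; have xx : x1 = x2 by apply: (mulIg (b ^+ j1)).
subst x2; exact: asr_trans e1 (asr_sym e2).
Qed.
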